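(* Let $m\leq n$ be positive integers ($n$ finite). Then $\gamma_{gr}^{L,2}(P_m\Box P_n)=mn$.
   Context: $P_m$ is the path on $m$ vertices and $G\Box H$ is the Cartesian product: vertex set $V(G)\times V(H)$, with $(u,v)\sim(x,y)$ iff ($u=x$ and $vy\in E(H)$) or ($v=y$ and $ux\in E(G)$). For a vertex $v$, $N(v)$ is its open neighborhood and $N[v]=N(v)\cup\{v\}$. A sequence $S=(v_1,\ldots,v_r)$ of distinct vertices is a $2$-$L$-sequence if for each $i$ there is $u_i\in N[v_i]$ such that the number of indices $j<i$ with $u_i\in N(v_j)$ is less than $2$. $\gamma_{gr}^{L,2}(G)$ is the maximum length of a $2$-$L$-sequence of $G$. *)

(* Defs.v *)
From mathcomp Require Import all_boot all_order.
Set Implicit Arguments. Unset Strict Implicit. Unset Printing Implicit Defensive.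

(* A finite simple graph is given by a vertex type T : finType and a
   symmetric irreflexive adjacency relation adj : rel T. *)

Definition onbhd (T : finType) (adj : rel T) (v : T) : {set T} := [set u | adj v u].
Definition cnbhd (T : finType) (adj : rel T) (v : T) : {set T} := v |: onbhd adj v.

(* S = (v_1,...,v_r) is a 2-L-sequence: the v_i are distinct, and for each i
   there is u_i in N[v_i] such that the number of indices j < i with
   u_i in N(v_j) is less than 2.  (0-indexed: v_i = tnth (in_tuple s) i.) *)
Definition is_2L_seq (T : finType) (adj : rel T) (s : seq T) : bool :=
  uniq s &&
  [forall i : 'I_(size s),
     [exists u in cnbhd adj (tnth (in_tuple s) i),
        #|[set j : 'I_(size s) | (j < i) && (u \in onbhd adj (tnth (in_tuple s) j))]| < 2]].

(* gamma_gr^{L,2}(G): the maximum length of a 2-L-sequence of G.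
   (Lengths are at most #|T| since vertices are distinct; the empty
   sequence is always a 2-L-sequence.) *)
Definition gamma_L2 (T : finType) (adj : rel T) : nat :=
  \max_(k < #|T|.+1 | [exists s : k.-tuple T, is_2L_seq adj s]) k.

Definition path_adj (m : nat) : rel 'I_m := fun i j => (i.+1 == j :> nat) || (j.+1 == i :> nat).

Definition cart_adj (A B : finType) (eA : rel A) (eB : rel B) : rel (A * B) :=
  fun x y => ((x.1 == y.1) && eB x.2 y.2) || ((x.2 == y.2) && eA x.1 y.1).
Arguments path_adj : clear implicits.

(* Main.v *)
Require Import Defs.
From mathcomp Require Import all_boot all_order zify.

Definition tw (m' n' a b : nat) : nat :=
  if a == m' then (if b == n' then n'.-1 else if b == n'.-1 then n' else b) else b.

Definition rk m' n' (x : 'I_m'.+1 * 'I_n'.+1) : nat :=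
  x.1 * n'.+1 + tw m' n' x.1 x.2.

Arguments rk {m' n'}.

Lemma tw_le m' n' a b : b <= n' -> tw m' n' a b <= n'.
Proof. rewrite /tw; case: ifP => _ //; case: ifP => _; [lia|]; case: ifP => _; lia. Qed.

Lemma tw_inv m' n' a b : b <= n' -> tw m' n' a (tw m' n' a b) = b.
Proof. move=> hb; rewrite /tw; do ! case: ifP => /eqP; lia. Qed.

Lemma rk_lt m' n' (x y : 'I_m'.+1 * 'I_n'.+1) :
  (rk x < rk y) = (x.1 < y.1) || (x.1 == y.1 :> nat) && (tw m' n' x.1 x.2 < tw m' n' y.1 y.2).
Proof.
rewrite /rk.
have hx := @tw_le m' n' x.1 x.2 (ltn_ord x.2).
have hy := @tw_le m' n' y.1 y.2 (ltn_ord y.2).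
case: (ltngtP x.1 y.1) => h.
- have: x.1.+1 * n'.+1 <= y.1 * n'.+1 by rewrite leq_mul2r h orbT.
  rewrite mulSn.
  lia.
- have: y.1.+1 * n'.+1 <= x.1 * n'.+1 by rewrite leq_mul2r h orbT.
  rewrite mulSn.
  lia.
- rewrite h; lia.
Qed.

Definition adjG m' n' := cart_adj (path_adj m'.+1) (path_adj n'.+1).

Arguments adjG {m' n'}.

Lemma adjE m' n' (x y : 'I_m'.+1 * 'I_n'.+1) :
  adjG x y = ((x.1 == y.1 :> nat) && ((x.2.+1 == y.2 :> nat) || (y.2.+1 == x.2 :> nat)))
          || ((x.2 == y.2 :> nat) && ((x.1.+1 == y.1 :> nat) || (y.1.+1 == x.1 :> nat))).
Proof. by []. Qed.

Lemma local m' n' (v : 'I_m'.+1 * 'I_n'.+1) :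
  exists u, ((u == v) || adjG v u) /\
  exists w1 w2, forall x, adjG x u -> rk x < rk v -> (x.1 : nat) = w1 /\ (x.2 : nat) = w2.
Proof.
case: v => a b.
have ha := ltn_ord a; have hb := ltn_ord b.
case: (boolP ((a < m') && (b < n') || (b.+1 < n'))) => c1.
  have hb1 : b.+1 < n'.+1 by lia.
  exists (a, Ordinal hb1); split.
    apply/orP; right; rewrite adjE /=; lia.
  exists a.-1, b.+1 => -[x1 x2]; rewrite adjE rk_lt /tw /=.
  have := ltn_ord x1; have := ltn_ord x2.
  do ! case: ifP => /eqP; lia.
case: (boolP (a < m')) => c2.
  have ha1 : a.+1 < m'.+1 by lia.
  exists (Ordinal ha1, b); split.
    apply/orP; right; rewrite adjE /=; lia.
  exists 0, 0 => -[x1 x2]; rewrite adjE rk_lt /tw /=.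
  have := ltn_ord x1; have := ltn_ord x2.
  do ! case: ifP => /eqP; lia.
case: (boolP (b == n' :> nat)) => c3.
  exists (a, b); split; first by rewrite eqxx.
  exists m'.-1, b => -[x1 x2]; rewrite adjE rk_lt /tw /=.
  have := ltn_ord x1; have := ltn_ord x2.
  do ! case: ifP => /eqP; lia.
have hn : n' < n'.+1 by [].
exists (a, Ordinal hn); split.
  apply/orP; right; rewrite adjE /=; lia.
exists m'.-1, n' => -[x1 x2]; rewrite adjE rk_lt /tw /=.
have := ltn_ord x1; have := ltn_ord x2.
do ! case: ifP => /eqP; lia.
Qed.

Definition fk m' n' (k : nat) : 'I_m'.+1 * 'I_n'.+1 :=
  (inord (k %/ n'.+1), inord (tw m' n' (k %/ n'.+1) (k %% n'.+1))).

Lemma rk_fk m' n' k : k < m'.+1 * n'.+1 -> rk (fk m' n' k) = k.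
Proof.
move=> hk.
have ha : k %/ n'.+1 < m'.+1 by rewrite ltn_divLR.
have hc : k %% n'.+1 <= n' by have := ltn_pmod k (ltn0Sn n'); lia.
rewrite /rk /fk /= !inordK //; last by have := @tw_le m' n' (k %/ n'.+1) _ hc; lia.
rewrite tw_inv //; by rewrite -divn_eq.
Qed.

Arguments rk_fk {m' n' k}.

Theorem mainTheorem14 (m n : nat) (hm : 0 < m) (hmn : m <= n) :
  gamma_L2 (cart_adj (path_adj m) (path_adj n)) = m * n.
Proof.
case: m hm hmn => [//|m'] _ hmn.
case: n hmn => [//|n'] _.
have cardT : #|{: 'I_m'.+1 * 'I_n'.+1}| = m'.+1 * n'.+1 by rewrite card_prod !card_ord.
apply/eqP; rewrite eqn_leq; apply/andP; split.
  apply/bigmax_leqP => k _; have := ltn_ord k; move: (nat_of_ord k); rewrite cardT; lia.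
set N := m'.+1 * n'.+1.
have hN : N < #|{: 'I_m'.+1 * 'I_n'.+1}|.+1 by rewrite cardT.
set s := map (fk m' n') (iota 0 N).
have hs : size s == N by rewrite size_map size_iota.
have nths : forall j, j < N -> nth (fk m' n' 0) s j = fk m' n' j.
  by move=> j hj; rewrite (nth_map 0) ?size_iota // nth_iota.
apply: (leq_trans _ (leq_bigmax_cond (Ordinal hN) _)) => //.
apply/existsP; exists (Tuple hs) => /=.
apply/andP; split.
  rewrite map_inj_in_uniq ?iota_uniq // => x y; rewrite !mem_iota /= !add0n => hx hy e.
  by rewrite -(rk_fk hx) -(rk_fk hy) e.
apply/forallP => i.
have hi : i < N by rewrite -(eqP hs) ltn_ord.
have ti : forall j : 'I_(size s), tnth (in_tuple s) j = fk m' n' j.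
  move=> j; rewrite (tnth_nth (fk m' n' 0)) /= nths //.
  by rewrite -(eqP hs) ltn_ord.
rewrite ti.
have [u [hu [w1 [w2 Hw]]]] := @local m' n' (fk m' n' i).
apply/existsP; exists u; apply/andP; split.
  by rewrite /cnbhd !inE.
apply/card_le1_eqP => j1 j2; rewrite !inE !ti => /andP [h1 a1] /andP [h2 a2].
have hj1 : j1 < N by rewrite -(eqP hs) ltn_ord.
have hj2 : j2 < N by rewrite -(eqP hs) ltn_ord.
have e : fk m' n' j1 = fk m' n' j2.
  move: (Hw _ a1) (Hw _ a2); rewrite !rk_fk // => /(_ h1) [e1 e2] /(_ h2) [e3 e4].
  move: e1 e2 e3 e4; case: (fk m' n' j1) => p1 p2; case: (fk m' n' j2) => q1 q2 /= e1 e2 e3 e4.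
  by congr pair; apply: val_inj => /=; lia.
by apply: val_inj; rewrite /= -(rk_fk hj1) -(rk_fk hj2) e.
Qed.
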